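(* For every Minkowski space $X$ of dimension at least $3$, $m(X)\geq 4$.
   Context: A Minkowski space is a finite-dimensional real normed space $(X,\|\cdot\|)$. For a set $S\subseteq X$, its midpoint set is $M(S)=\{\tfrac12(x+y): x,y\in S,\ x\neq y\}$. A set $S\subseteq X$ is an M-set if every vector in $M(S)$ has norm exactly $1$ and every vector in $S$ has norm strictly greater than $1$. $m(X)$ denotes the largest cardinality of an M-set in $X$ if such a largest finite cardinality exists, and $m(X)=\infty$ otherwise. *)

(* Defs.v *)
From Stdlib Require Import Reals List.
From Stdlib Require Fin.
Open Scope R_scope.

(* Every n-dimensional real normed space is linearly isometric to R^n equipped
   with some norm; we model R^n as functions Fin.t n -> R. *)
Definition Vec (n : nat) : Type := Fin.t n -> R.

Definition vzero {n : nat} : Vec n := fun _ => 0.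
Definition vadd {n : nat} (x y : Vec n) : Vec n := fun i => x i + y i.
Definition vscale {n : nat} (a : R) (x : Vec n) : Vec n := fun i => a * x i.

Definition is_norm {n : nat} (N : Vec n -> R) : Prop :=
  (forall x, N x = 0 -> x = vzero) /\
  (forall (a : R) x, N (vscale a x) = Rabs a * N x) /\
  (forall x y, N (vadd x y) <= N x + N y).

Definition midpoint {n : nat} (x y : Vec n) : Vec n := vscale (/2) (vadd x y).

Definition is_Mset {n : nat} (N : Vec n -> R) (S : Vec n -> Prop) : Prop :=
  (forall x y, S x -> S y -> x <> y -> N (midpoint x y) = 1) /\
  (forall x, S x -> 1 < N x).

Definition m_ge {n : nat} (N : Vec n -> R) (k : nat) : Prop :=
  exists S : Vec n -> Prop, is_Mset N S /\
    exists l : list (Vec n), NoDup l /\ length l = k /\ (forall x, In x l -> S x).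

(* Main.v *)
Require Import Defs.
From Stdlib Require Import Reals List Lra Psatz Classical FunctionalExtensionality.
From Stdlib Require Fin.
Open Scope R_scope.

Definition sublin (K : R -> R -> R -> R) : Prop :=
  (forall k x y z, K (k*x) (k*y) (k*z) = Rabs k * K x y z) /\
  (forall x y z x' y' z', K (x+x') (y+y') (z+z') <= K x y z + K x' y' z').

Definition definite (K : R -> R -> R -> R) : Prop :=
  forall x y z, K x y z = 0 -> x = 0 /\ y = 0 /\ z = 0.

Lemma Kext (K : R -> R -> R -> R) x y z x' y' z' :
  x = x' -> y = y' -> z = z' -> K x y z = K x' y' z'.
Proof. intros -> -> ->; reflexivity. Qed.

Lemma Kscale K k x y z : sublin K -> K (k*x) (k*y) (k*z) = Rabs k * K x y z.
Proof. intros [H _]; apply H. Qed.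

Lemma Kadd K x y z x' y' z' : sublin K ->
  K (x+x') (y+y') (z+z') <= K x y z + K x' y' z'.
Proof. intros [_ H]; apply H. Qed.

Lemma K0 K : sublin K -> K 0 0 0 = 0.
Proof.
  intro HK. rewrite (Kext K 0 0 0 (0*0) (0*0) (0*0)) by ring.
  rewrite Kscale by auto. rewrite Rabs_R0; ring.
Qed.

Lemma Kneg K x y z : sublin K -> K (-x) (-y) (-z) = K x y z.
Proof.
  intro HK. rewrite (Kext K (-x) (-y) (-z) ((-1)*x) ((-1)*y) ((-1)*z)) by ring.
  rewrite Kscale by auto. rewrite (Rabs_left (-1)) by lra; ring.
Qed.

Lemma Knonneg K x y z : sublin K -> 0 <= K x y z.
Proof.
  intro HK. pose proof (Kadd K x y z (-x) (-y) (-z) HK).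
  rewrite Kneg in H by auto.
  rewrite (Kext K (x + -x) (y + -y) (z + -z) 0 0 0) in H by ring.
  rewrite K0 in H by auto. lra.
Qed.

Lemma Kpos K k x y z : sublin K -> 0 <= k -> K (k*x) (k*y) (k*z) = k * K x y z.
Proof. intros HK Hk. rewrite Kscale by auto. rewrite Rabs_pos_eq; auto. Qed.

Lemma Ktri K x y z x' y' z' : sublin K ->
  K x y z <= K x' y' z' + K (x-x') (y-y') (z-z').
Proof.
  intro HK. rewrite (Kext K x y z (x' + (x-x')) (y' + (y-y')) (z'+(z-z'))) by ring.
  apply Kadd; auto.
Qed.

Lemma Kbound K dx dy dz : sublin K ->
  K dx dy dz <= Rabs dx * K 1 0 0 + Rabs dy * K 0 1 0 + Rabs dz * K 0 0 1.
Proof.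
  intro HK.
  assert (H1 : K dx dy dz <= K dx 0 0 + K 0 dy dz).
  { rewrite (Kext K dx dy dz (dx + 0) (0 + dy) (0+dz)) by ring. apply Kadd; auto. }
  assert (H2 : K 0 dy dz <= K 0 dy 0 + K 0 0 dz).
  { rewrite (Kext K 0 dy dz (0 + 0) (dy + 0) (0+dz)) by ring. apply Kadd; auto. }
  rewrite (Kext K dx 0 0 (dx*1) (dx*0) (dx*0)) in H1 by ring.
  rewrite (Kext K 0 dy 0 (dy*0) (dy*1) (dy*0)) in H2 by ring.
  rewrite (Kext K 0 0 dz (dz*0) (dz*0) (dz*1)) in H2 by ring.
  rewrite Kscale in H1 by auto. rewrite !Kscale in H2 by auto. lra.
Qed.

Lemma Kdiff K x y z x' y' z' : sublin K ->
  Rabs (K x y z - K x' y' z') <=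
  Rabs (x-x') * K 1 0 0 + Rabs (y-y') * K 0 1 0 + Rabs (z-z') * K 0 0 1.
Proof.
  intro HK.
  pose proof (Ktri K x y z x' y' z' HK).
  pose proof (Ktri K x' y' z' x y z HK).
  pose proof (Kbound K (x-x') (y-y') (z-z') HK).
  pose proof (Kbound K (x'-x) (y'-y) (z'-z) HK).
  rewrite (Rabs_minus_sym x' x), (Rabs_minus_sym y' y), (Rabs_minus_sym z' z) in H2.
  apply Rabs_le; lra.
Qed.

Lemma Kcont K g1 g2 g3 : sublin K -> continuity g1 -> continuity g2 -> continuity g3 ->
  continuity (fun t => K (g1 t) (g2 t) (g3 t)).
Proof.
  intros HK C1 C2 C3 t0 eps Heps.
  set (C := K 1 0 0 + K 0 1 0 + K 0 0 1).
  assert (HC : 0 <= C) by (unfold C; pose proof (Knonneg K 1 0 0 HK);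
     pose proof (Knonneg K 0 1 0 HK); pose proof (Knonneg K 0 0 1 HK); lra).
  set (e := eps / (C + 1)).
  assert (He : 0 < e) by (unfold e; apply Rdiv_lt_0_compat; lra).
  destruct (C1 t0 e He) as [d1 [Hd1 P1]].
  destruct (C2 t0 e He) as [d2 [Hd2 P2]].
  destruct (C3 t0 e He) as [d3 [Hd3 P3]].
  exists (Rmin d1 (Rmin d2 d3)). split.
  { apply Rmin_pos; auto. apply Rmin_pos; auto. }
  intros x [Hx Hd]. simpl in *. unfold R_dist in *.
  assert (A1 : Rabs (g1 x - g1 t0) < e).
  { apply P1. split; auto. simpl. unfold R_dist.
    eapply Rlt_le_trans; [apply Hd|apply Rmin_l]. }
  assert (A2 : Rabs (g2 x - g2 t0) < e).
  { apply P2. split; auto. simpl. unfold R_dist.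
    eapply Rlt_le_trans; [apply Hd|]. eapply Rle_trans; [apply Rmin_r|apply Rmin_l]. }
  assert (A3 : Rabs (g3 x - g3 t0) < e).
  { apply P3. split; auto. simpl. unfold R_dist.
    eapply Rlt_le_trans; [apply Hd|]. eapply Rle_trans; [apply Rmin_r|apply Rmin_r]. }
  eapply Rle_lt_trans. apply Kdiff; auto.
  pose proof (Knonneg K 1 0 0 HK); pose proof (Knonneg K 0 1 0 HK);
  pose proof (Knonneg K 0 0 1 HK).
  assert (e * C < eps).
  { unfold e. unfold Rdiv. replace eps with (eps * / (C+1) * (C+1)) at 2 by (field; lra).
    apply Rmult_lt_compat_l. apply Rmult_lt_0_compat; auto. apply Rinv_0_lt_compat; lra. lra. }
  unfold C in H2.
  nra.
Qed.

Lemma ext_step K (f : R -> R -> R) : sublin K ->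
  (forall a b a' b', f (a+a') (b+b') = f a b + f a' b') ->
  (forall k a b, f (k*a) (k*b) = k * f a b) ->
  (forall a b, f a b <= K a b 0) ->
  exists c, forall a b s, f a b + s * c <= K a b s.
Proof.
  intros HK fadd fsc fle.
  set (E := fun x => exists a b, x = f a b - K a b (-1)).
  assert (key : forall a b a' b', f a b - K a b (-1) <= K a' b' 1 - f a' b').
  { intros. pose proof (fle (a+a') (b+b')). rewrite fadd in H.
    pose proof (Kadd K a b (-1) a' b' 1 HK).
    rewrite (Kext K (a+a') (b+b') 0 (a+a') (b+b') (-1+1)) in H by ring. lra. }
  destruct (completeness E) as [c [Hub Hlub]].
  { exists (K 0 0 1 - f 0 0). intros x [a [b ->]]. apply key. }
  { exists (f 0 0 - K 0 0 (-1)). exists 0, 0. reflexivity. }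
  assert (L1 : forall a b, f a b - K a b (-1) <= c).
  { intros. apply Hub. exists a, b. reflexivity. }
  assert (L2 : forall a b, c <= K a b 1 - f a b).
  { intros. apply Hlub. intros x [a' [b' ->]]. apply key. }
  exists c. intros a b s.
  destruct (Rtotal_order s 0) as [Hs|[Hs|Hs]].
  - set (m := -s). assert (Hm : 0 < m) by (unfold m; lra).
    pose proof (L1 (a/m) (b/m)).
    assert (E1 : f a b = m * f (a/m) (b/m)).
    { rewrite <- fsc. f_equal; field; lra. }
    assert (E2 : K a b s = m * K (a/m) (b/m) (-1)).
    { rewrite <- Kpos by (auto; lra). apply Kext; unfold m in *; field; lra. }
    rewrite E1, E2. replace s with (-m) by (unfold m; ring). nra.
  - subst s. rewrite Rmult_0_l, Rplus_0_r. apply fle.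
  - pose proof (L2 (a/s) (b/s)).
    assert (E1 : f a b = s * f (a/s) (b/s)).
    { rewrite <- fsc. f_equal; field; lra. }
    assert (E2 : K a b s = s * K (a/s) (b/s) 1).
    { rewrite <- Kpos by (auto; lra). apply Kext; field; lra. }
    rewrite E1, E2. nra.
Qed.

Lemma hb K : sublin K ->
  exists c1 c2, forall l m s, l * K 1 0 0 + m * c1 + s * c2 <= K l m s.
Proof.
  intro HK.
  assert (S1 : sublin (fun a b s => K a s 0)).
  { split.
    + intros. rewrite (Kext K (k*x) (k*z) 0 (k*x) (k*z) (k*0)) by ring. apply Kscale; auto.
    + intros. rewrite (Kext K (x+x') (z+z') 0 (x+x') (z+z') (0+0)) by ring. apply Kadd; auto. }
  destruct (ext_step (fun a b s => K a s 0) (fun a b => a * K 1 0 0) S1) as [c1 Hc1].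
  - intros; ring.
  - intros; ring.
  - intros a b. simpl. rewrite (Kext K a 0 0 (a*1) (a*0) (a*0)) by ring. rewrite Kscale by auto.
    pose proof (Knonneg K 1 0 0 HK). pose proof (Rle_abs a). nra.
  - destruct (ext_step K (fun a b => a * K 1 0 0 + b * c1) HK) as [c2 Hc2].
    + intros; ring.
    + intros; ring.
    + intros a b. apply (Hc1 a 0 b).
    + exists c1, c2. intros. apply Hc2.
Qed.

Lemma ker3 p1 p2 p3 q1 q2 q3 : exists x y z, ~ (x = 0 /\ y = 0 /\ z = 0) /\
  p1*x + p2*y + p3*z = 0 /\ q1*x + q2*y + q3*z = 0.
Proof.
  set (C1 := p2*q3 - p3*q2). set (C2 := p3*q1 - p1*q3). set (C3 := p1*q2 - p2*q1).
  destruct (classic (C1 = 0 /\ C2 = 0 /\ C3 = 0)) as [[E1 [E2 E3]] | NC].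
  2: { exists C1, C2, C3. split; auto. unfold C1, C2, C3; split; ring. }
  destruct (classic (p1 = 0 /\ p2 = 0 /\ p3 = 0)) as [[F1 [F2 F3]]|NP].
  - subst p1 p2 p3.
    destruct (classic (q1 = 0 /\ q2 = 0 /\ q3 = 0)) as [[G1 [G2 G3]]|NQ].
    + exists 1, 0, 0. subst. split; [lra|split; ring].
    + destruct (Req_dec q1 0).
      * destruct (Req_dec q2 0).
        -- exists 1, 0, 0. split; [lra|]. subst. split; ring.
        -- exists 0, q3, (-q2). split; [intros [_ [A B]]; lra|]. split; ring.
      * exists q2, (-q1), 0. split; [intros [_ [A B]]; lra|]. split; ring.
  - destruct (Req_dec p1 0).
    + destruct (Req_dec p2 0).
      * subst. exists 1, 0, 0. split; [lra|]. split; [ring|].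
        unfold C2, C3 in *. assert (p3 <> 0) by tauto.
        apply (Rmult_eq_reg_l p3); auto. nra.
      * exists 0, p3, (-p2). split; [intros [_ [A B]]; lra|]. split; [ring|].
        unfold C1 in E1. nra.
    + exists p2, (-p1), 0. split; [intros [_ [A B]]; lra|]. split; [ring|].
      unfold C3 in E3. nra.
Qed.

Record P3 := mkP { px : R; py : R; pz : R }.
Definition KK (K : R -> R -> R -> R) P := K (px P) (py P) (pz P).
Definition mid P Q := mkP ((px P + px Q)/2) ((py P + py Q)/2) ((pz P + pz Q)/2).

Lemma Klayer K : sublin K -> definite K -> K (/2) (/2) 0 = 1 -> K (/2) (-/2) 0 = 1 ->
  1 < K 1 0 0 -> 1 < K 0 1 0 ->
  exists P1 P2 P3 P4, P1<>P2 /\ P1<>P3 /\ P1<>P4 /\ P2<>P3 /\ P2<>P4 /\ P3<>P4 /\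
   1 < KK K P1 /\ 1 < KK K P2 /\ 1 < KK K P3 /\ 1 < KK K P4 /\
   KK K (mid P1 P2) = 1 /\ KK K (mid P1 P3) = 1 /\ KK K (mid P1 P4) = 1 /\
   KK K (mid P2 P3) = 1 /\ KK K (mid P2 P4) = 1 /\ KK K (mid P3 P4) = 1.
Proof.
  intros HK Hdef Hb Hc Hu Hv.
  destruct (hb K HK) as [c1 [c2 Fu]].
  assert (HK' : sublin (fun l m s => K m l s)).
  { split; intros; simpl. apply Kscale; auto.
    apply Kadd; auto. }
  destruct (hb _ HK') as [d1 [d2 Fv]]. simpl in Fv.
  destruct (ker3 (K 1 0 0) c1 c2 d1 (K 0 1 0) d2) as [x [y [z [Hnz [Ex Ey]]]]].
  set (n := K x y z).
  assert (Hn : 0 < n).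
  { destruct (Knonneg K x y z HK) as [H|H]; auto. exfalso. apply Hnz. apply Hdef. auto. }
  set (a1 := x / n). set (a2 := y/n). set (a3 := z/n).
  assert (Ha : K a1 a2 a3 = 1).
  { unfold a1, a2, a3. rewrite (Kext K (x/n) (y/n) (z/n) (/n*x) (/n*y) (/n*z)) by (field; lra).
    rewrite Kpos by (auto; left; apply Rinv_0_lt_compat; auto). fold n. field. lra. }
  assert (Au : a1 * K 1 0 0 + a2 * c1 + a3 * c2 = 0).
  { unfold a1, a2, a3. field_simplify; [|lra]. rewrite (Rmult_comm x), (Rmult_comm y), (Rmult_comm z).
    rewrite Ex. field. lra. }
  assert (Av : a2 * K 0 1 0 + a1 * d1 + a3 * d2 = 0).
  { unfold a1, a2, a3. field_simplify; [|lra].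
    replace (y * K 0 1 0 + x * d1 + z * d2) with (d1 * x + K 0 1 0 * y + d2 * z) by ring.
    rewrite Ey. field. lra. }
  clearbody a1 a2 a3.
  assert (Fu' : forall l m s, - (l * K 1 0 0 + m * c1 + s * c2) <= K l m s).
  { intros. rewrite <- (Kneg K l m s HK). pose proof (Fu (-l) (-m) (-s)). lra. }
  assert (Fv' : forall l m s, - (m * K 0 1 0 + l * d1 + s * d2) <= K l m s).
  { intros. rewrite <- (Kneg K l m s HK). pose proof (Fv (-m) (-l) (-s)). lra. }
  assert (K11 : K 1 1 0 = 2).
  { rewrite (Kext K 1 1 0 (2 * /2) (2 * /2) (2*0)) by field. rewrite Kpos by (auto; lra). lra. }
  assert (K1m : K 1 (-1) 0 = 2).
  { rewrite (Kext K 1 (-1) 0 (2 * /2) (2 * -/2) (2*0)) by field. rewrite Kpos by (auto; lra). lra. }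
  pose proof (Fu 1 1 0) as U1. pose proof (Fu 1 (-1) 0) as U2. rewrite K11 in U1. rewrite K1m in U2.
  exists (mkP (a1+1) a2 a3), (mkP (a1-1) a2 a3), (mkP (-a1) (1-a2) (-a3)), (mkP (-a1) (-a2-1) (-a3)).
  unfold KK, mid; simpl.
  repeat split.
  - intro E. injection E. lra.
  - intro E. injection E. intros. nra.
  - intro E. injection E. intros. nra.
  - intro E. injection E. intros. nra.
  - intro E. injection E. intros. nra.
  - intro E. injection E. lra.
  - pose proof (Fu (a1+1) a2 a3). lra.
  - pose proof (Fu' (a1-1) a2 a3). lra.
  - pose proof (Fv (1-a2) (-a1) (-a3)). lra.
  - pose proof (Fv' (-a1) (-a2-1) (-a3)). lra.
  - transitivity (K a1 a2 a3); auto. apply Kext; field.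
  - transitivity (K (/2) (/2) 0); auto. apply Kext; field.
  - transitivity (K (/2) (-/2) 0); auto. apply Kext; field.
  - transitivity (K (/2) (-/2) 0); auto. rewrite <- (Kneg K (/2) (-/2) 0 HK). apply Kext; field.
  - transitivity (K (/2) (/2) 0); auto. rewrite <- (Kneg K (/2) (/2) 0 HK). apply Kext; field.
  - transitivity (K a1 a2 a3); auto. rewrite <- (Kneg K a1 a2 a3 HK). apply Kext; field.
Qed.

Lemma cont_rmul (g : R -> R) (r : R) : continuity g -> continuity (fun t => g t * r).
Proof. intros. apply (continuity_mult g (fun _ => r)); auto. apply continuity_const. intros ? ?; reflexivity. Qed.

Definition mF (M : R -> R -> R -> R) r s t := M ((1-t)*r) (s*t) 0.
Definition F (M : R -> R -> R -> R) r s t :=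
  M (mF M r s t * r + (1-t)*r) (s*t) 0 - M (mF M r s t * r - (1-t)*r) (-(s*t)) 0.

Lemma F_cont M r s : sublin M -> continuity (F M r s).
Proof.
  intro HM. unfold F.
  assert (C: continuity (fun t => mF M r s t)).
  { unfold mF. apply Kcont; auto; reg. }
  apply (continuity_minus (fun t => M (mF M r s t * r + (1-t)*r) (s*t) 0)
                          (fun t => M (mF M r s t * r - (1-t)*r) (-(s*t)) 0)).
  - apply Kcont; auto; [|reg|reg].
    apply (continuity_plus (fun t => mF M r s t * r) (fun t => (1-t)*r)).
    apply cont_rmul; auto. reg.
  - apply Kcont; auto; [|reg|reg].
    apply (continuity_minus (fun t => mF M r s t * r) (fun t => (1-t)*r)).
    apply cont_rmul; auto. reg.
Qed.

Definition twoD_concl (M : R -> R -> R -> R) := exists bx bY cx cy,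
  M bx bY 0 = 1 /\ M cx cy 0 = 1 /\ 1 < M (bx+cx) (bY+cy) 0 /\
  1 < M (bx-cx) (bY-cy) 0 /\ bx*cy - bY*cx <> 0.

Lemma twoD_s M r s : sublin M -> definite M -> 0 < r -> M r 0 0 = 1 -> s <> 0 ->
  F M r s 1 <= 0 -> twoD_concl M.
Proof.
  intros HM Hdef Hr Hr1 Hs HF1.
  assert (F0 : F M r s 0 = 2).
  { unfold F, mF.
    rewrite (Kext M ((1-0)*r) (s*0) 0 r 0 0) by ring. rewrite Hr1.
    rewrite (Kext M (1*r + (1-0)*r) (s*0) 0 (2*r) (2*0) (2*0)) by ring.
    rewrite (Kext M (1*r - (1-0)*r) (-(s*0)) 0 0 0 0) by ring.
    rewrite K0, Kpos, Hr1 by (auto; lra). ring. }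
  destruct (IVT_cor (F M r s) 0 1 (F_cont M r s HM) ltac:(lra)) as [t [[Ht0 Ht1] Ht]].
  { rewrite F0. nra. }
  assert (Htp : 0 < t). { destruct Ht0 as [H|H]; auto. subst t. rewrite F0 in Ht. lra. }
  set (m := mF M r s t).
  assert (Hm : 0 < m).
  { destruct (Knonneg M ((1-t)*r) (s*t) 0 HM) as [H|H]; auto.
    exfalso. symmetry in H. apply Hdef in H. destruct H as [_ [H _]].
    apply Rmult_integral in H. lra. }
  set (qx := (1-t)*r/m). set (qy := s*t/m).
  assert (Hq : M qx qy 0 = 1).
  { unfold qx, qy. rewrite (Kext M ((1-t)*r/m) (s*t/m) 0 (/m*((1-t)*r)) (/m*(s*t)) (/m*0)) by (field; lra).
    rewrite Kpos by (auto; left; apply Rinv_0_lt_compat; auto). fold (mF M r s t) m. field; lra. }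
  assert (HD : M (r+qx) qy 0 = M (r-qx) (-qy) 0).
  { unfold qx, qy.
    rewrite (Kext M (r+(1-t)*r/m) (s*t/m) 0 (/m*(m*r + (1-t)*r)) (/m*(s*t)) (/m*0)) by (field; lra).
    rewrite (Kext M (r-(1-t)*r/m) (-(s*t/m)) 0 (/m*(m*r - (1-t)*r)) (/m*(-(s*t))) (/m*0)) by (field; lra).
    rewrite !Kpos by (auto; left; apply Rinv_0_lt_compat; auto).
    unfold F in Ht. fold m in Ht. nra. }
  assert (Hqy : qy <> 0).
  { unfold qy. intro E. apply Rmult_integral in E. destruct E as [E|E].
    apply Rmult_integral in E; lra. apply Rinv_neq_0_compat in E; lra. }
  destruct (Rle_lt_dec (M (r+qx) qy 0) 1) as [Hle|Hgt].
  - assert (Hsum : M (2*r) 0 0 <= M (r+qx) qy 0 + M (r-qx) (-qy) 0).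
    { rewrite (Kext M (2*r) 0 0 ((r+qx)+(r-qx)) (qy + -qy) (0+0)) by ring. apply Kadd; auto. }
    rewrite (Kext M (2*r) 0 0 (2*r) (2*0) (2*0)) in Hsum by ring.
    rewrite Kpos, Hr1 in Hsum by (auto; lra).
    exists (r+qx), qy, (r-qx), (-qy). repeat split.
    + lra.
    + lra.
    + rewrite (Kext M (r+qx + (r-qx)) (qy + -qy) 0 (2*r) (2*0) (2*0)) by ring.
      rewrite Kpos, Hr1 by (auto; lra). lra.
    + rewrite (Kext M (r+qx - (r-qx)) (qy - -qy) 0 (2*qx) (2*qy) (2*0)) by ring.
      rewrite Kpos, Hq by (auto; lra). lra.
    + intro E. assert (r * qy = 0) by nra. apply Rmult_integral in H. lra.
  - exists r, 0, qx, qy. repeat split; auto.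
    + rewrite Rplus_0_l. auto.
    + rewrite Rminus_0_l. rewrite HD in Hgt. auto.
    + intro E. assert (r * qy = 0) by nra. apply Rmult_integral in H. lra.
Qed.

Lemma twoD M : sublin M -> definite M -> twoD_concl M.
Proof.
  intros HM Hdef.
  assert (H1 : 0 < M 1 0 0).
  { destruct (Knonneg M 1 0 0 HM) as [H|H]; auto. symmetry in H. apply Hdef in H. lra. }
  set (r := / M 1 0 0).
  assert (Hr : 0 < r) by (apply Rinv_0_lt_compat; auto).
  assert (Hr1 : M r 0 0 = 1).
  { rewrite (Kext M r 0 0 (r*1) (r*0) (r*0)) by ring. rewrite Kpos by (auto; lra).
    unfold r. field. lra. }
  set (m1 := M 0 1 0).
  assert (E1 : F M r 1 1 = M (m1*r) 1 0 - M (m1*r) (-1) 0).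
  { unfold F, mF. rewrite (Kext M ((1-1)*r) (1*1) 0 0 1 0) by ring. fold m1.
    f_equal; apply Kext; ring. }
  assert (E2 : F M r (-1) 1 = M (m1*r) (-1) 0 - M (m1*r) 1 0).
  { unfold F, mF. rewrite (Kext M ((1-1)*r) (-1*1) 0 (-0) (-(1)) (-0)) by ring.
    rewrite (Kneg M 0 1 0 HM). fold m1.
    f_equal; apply Kext; ring. }
  destruct (Rle_dec (F M r 1 1) 0).
  - apply (twoD_s M r 1); auto; lra.
  - apply (twoD_s M r (-1)); auto; lra.
Qed.

Definition comb {n : nat} (x y z : R) : Vec n := fun j =>
  match proj1_sig (Fin.to_nat j) with 0%nat => x | 1%nat => y | 2%nat => z | _ => 0 end.

Lemma comb_eval {n : nat} k (H : (k < n)%nat) x y z :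
  comb x y z (Fin.of_nat_lt H) = match k with 0%nat => x | 1%nat => y | 2%nat => z | _ => 0 end.
Proof. unfold comb. rewrite Fin.to_nat_of_nat. reflexivity. Qed.

Lemma comb_inj {n : nat} (H : (3 <= n)%nat) x y z x' y' z' :
  @comb n x y z = comb x' y' z' -> x = x' /\ y = y' /\ z = z'.
Proof.
  intro E.
  assert (H0 : (0 < n)%nat) by lia. assert (H1 : (1 < n)%nat) by lia. assert (H2 : (2 < n)%nat) by lia.
  pose proof (f_equal (fun v => v (Fin.of_nat_lt H0)) E) as E0.
  pose proof (f_equal (fun v => v (Fin.of_nat_lt H1)) E) as E1.
  pose proof (f_equal (fun v => v (Fin.of_nat_lt H2)) E) as E2.
  cbv beta in E0, E1, E2. rewrite !comb_eval in E0, E1, E2. auto.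
Qed.

Lemma comb_scale {n : nat} k x y z : @comb n (k*x) (k*y) (k*z) = vscale k (comb x y z).
Proof.
  apply functional_extensionality. intro j. unfold vscale, comb.
  destruct (proj1_sig (Fin.to_nat j)) as [|[|[|]]]; ring.
Qed.

Lemma comb_add {n : nat} x y z x' y' z' :
  @comb n (x+x') (y+y') (z+z') = vadd (comb x y z) (comb x' y' z').
Proof.
  apply functional_extensionality. intro j. unfold vadd, comb.
  destruct (proj1_sig (Fin.to_nat j)) as [|[|[|]]]; ring.
Qed.

Lemma M_sublin n (N : Vec n -> R) : is_norm N -> sublin (fun x y z => N (comb x y z)).
Proof.
  intros [_ [Hs Ht]]. split.
  - intros. rewrite comb_scale. apply Hs.
  - intros. rewrite comb_add. apply Ht.
Qed.

Lemma M_definite n (N : Vec n -> R) : (3 <= n)%nat -> is_norm N ->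
  definite (fun x y z => N (comb x y z)).
Proof.
  intros Hn [Hz _] x y z E. apply Hz in E.
  assert (E' : @comb n x y z = comb 0 0 0).
  { rewrite E. apply functional_extensionality. intro j. unfold vzero, comb.
    destruct (proj1_sig (Fin.to_nat j)) as [|[|[|]]]; reflexivity. }
  apply comb_inj in E'; auto.
Qed.

Lemma mid_comm P Q : mid P Q = mid Q P.
Proof. unfold mid. f_equal; field. Qed.

Lemma midpoint_comm {n : nat} (x y : Vec n) : midpoint x y = midpoint y x.
Proof.
  unfold midpoint, vscale, vadd. apply functional_extensionality. intro; ring_simplify. f_equal; ring.
Qed.

Lemma assemble n (N : Vec n -> R) (f : P3 -> Vec n) (G : P3 -> R) :
  (forall P Q, f P = f Q -> P = Q) ->
  (forall P Q, midpoint (f P) (f Q) = f (mid P Q)) ->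
  (forall P, N (f P) = G P) ->
  forall P1 P2 P3 P4, P1<>P2 -> P1<>P3 -> P1<>P4 -> P2<>P3 -> P2<>P4 -> P3<>P4 ->
   1 < G P1 -> 1 < G P2 -> 1 < G P3 -> 1 < G P4 ->
   G (mid P1 P2) = 1 -> G (mid P1 P3) = 1 -> G (mid P1 P4) = 1 ->
   G (mid P2 P3) = 1 -> G (mid P2 P4) = 1 -> G (mid P3 P4) = 1 -> m_ge N 4.
Proof.
  intros finj fmid fN P1 P2 P3 P4 D12 D13 D14 D23 D24 D34 N1 N2 N3 N4 M12 M13 M14 M23 M24 M34.
  assert (fne : forall P Q, P <> Q -> f P <> f Q) by (intros P Q H E; apply H, finj, E).
  exists (fun v => v = f P1 \/ v = f P2 \/ v = f P3 \/ v = f P4). split.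
  - split.
    + intros x y Hx Hy Hxy.
      destruct Hx as [ -> | [ -> | [ -> | -> ]]]; destruct Hy as [ -> | [ -> | [ -> | -> ]]];
        try (exfalso; apply Hxy; reflexivity);
        rewrite ?fmid, ?fN; auto;
        try (rewrite mid_comm; auto).
    + intros x Hx. destruct Hx as [ -> | [ -> | [ -> | -> ]]]; rewrite fN; auto.
  - exists (f P1 :: f P2 :: f P3 :: f P4 :: nil). split; [|split; [reflexivity|]].
    + pose proof (fne _ _ D12). pose proof (fne _ _ D13). pose proof (fne _ _ D14).
      pose proof (fne _ _ D23). pose proof (fne _ _ D24). pose proof (fne _ _ D34).
      repeat constructor; simpl; intuition.
    + intros x Hx. simpl in Hx. intuition.
Qed.

Theorem lemma4 (n : nat) (N : Vec n -> R) :
  (3 <= n)%nat -> is_norm N -> m_ge N 4.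
Proof.
  intros Hn HN.
  set (M := fun x y z => N (@comb n x y z)).
  assert (HM : sublin M) by apply (M_sublin n N HN).
  assert (HMd : definite M) by apply (M_definite n N Hn HN).
  destruct (twoD M HM HMd) as [bx [bY [cx [cy [Hb [Hc [Hu [Hv Hdet]]]]]]]].
  set (u1 := bx+cx). set (u2 := bY+cy). set (v1 := bx-cx). set (v2 := bY-cy).
  set (K := fun l m s => M (l*u1 + m*v1) (l*u2 + m*v2) s).
  assert (Hdet' : u1*v2 - u2*v1 <> 0) by (unfold u1, u2, v1, v2; intro E; apply Hdet; nra).
  assert (HK : sublin K).
  { split; intros; unfold K.
    - rewrite <- Kscale by auto. apply Kext; ring.
    - eapply Rle_trans; [|apply Kadd; auto]. right. apply Kext; ring. }
  assert (lin : forall l m, l*u1 + m*v1 = 0 -> l*u2 + m*v2 = 0 -> l = 0 /\ m = 0).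
  { intros l m E1 E2.
    assert (l * (u1*v2 - u2*v1) = 0).
    { replace (l * (u1*v2 - u2*v1)) with (v2*(l*u1 + m*v1) - v1*(l*u2+m*v2)) by ring.
      rewrite E1, E2; ring. }
    assert (m * (u1*v2 - u2*v1) = 0).
    { replace (m * (u1*v2 - u2*v1)) with (u1*(l*u2 + m*v2) - u2*(l*u1+m*v1)) by ring.
      rewrite E1, E2; ring. }
    apply Rmult_integral in H. apply Rmult_integral in H0. intuition. }
  assert (HKd : definite K).
  { intros l m s E. apply HMd in E. destruct E as [E1 [E2 E3]].
    destruct (lin l m E1 E2). auto. }
  assert (K1 : K (/2) (/2) 0 = 1).
  { unfold K. rewrite <- Hb. apply Kext; unfold u1, v1, u2, v2; field. }
  assert (K2 : K (/2) (-/2) 0 = 1).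
  { unfold K. rewrite <- Hc. apply Kext; unfold u1, v1, u2, v2; field. }
  assert (K3 : 1 < K 1 0 0).
  { unfold K. eapply Rlt_le_trans; [apply Hu|]. right. apply Kext; unfold u1, u2; ring. }
  assert (K4 : 1 < K 0 1 0).
  { unfold K. eapply Rlt_le_trans; [apply Hv|]. right. apply Kext; unfold v1, v2; ring. }
  destruct (Klayer K HK HKd K1 K2 K3 K4) as [P1 [P2 [P3 [P4 H]]]].
  destruct H as [D12 [D13 [D14 [D23 [D24 [D34 [N1 [N2 [N3 [N4 [M12 [M13 [M14 [M23 [M24 M34]]]]]]]]]]]]]]].
  apply (assemble n N (fun P => @comb n (px P*u1 + py P*v1) (px P*u2 + py P*v2) (pz P)) (KK K)) with P1 P2 P3 P4; auto.
  - intros [x y z] [x' y' z'] E. simpl in E. apply comb_inj in E; auto.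
    destruct E as [E1 [E2 E3]].
    destruct (lin (x-x') (y-y')) as [A B]; try lra. subst. f_equal; lra.
  - intros P Q. unfold midpoint. rewrite <- comb_add, <- comb_scale. unfold mid; simpl.
    f_equal; field.
Qed.
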